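(* Let $T:\mathcal{M}_d\to\mathcal{M}_d$ be a doubly stochastic quantum channel, $X\in\mathcal{M}_d$ positive definite and $q\geq2$. Then $$\|T(X)\|_{q,\frac{\mathbb{1}_d}{d}}^q-\|X\|_{q,\frac{\mathbb{1}_d}{d}}^q\leq-\mathcal{E}^2_{T^*T-\text{id}}(X^{q/2}).$$
   Context: Doubly stochastic channel: completely positive, trace preserving, $T(\mathbb{1})=T^*(\mathbb{1})=\mathbb{1}$ ($T^*$ the Hilbert–Schmidt adjoint). Weighted norm: $\|Y\|_{p,\frac{\mathbb{1}_d}{d}}=d^{-1/p}(\text{tr}|Y|^p)^{1/p}$. Dirichlet form: $\mathcal{E}^2_{\mathcal{L}}(Y)=-\frac1d\text{tr}[\mathcal{L}(Y)Y]$. *)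

(* Defs.v *)
From HB Require Import structures.
From mathcomp Require Import all_boot all_order all_algebra.
From mathcomp Require Import complex.
From mathcomp Require Import reals exp.
Set Implicit Arguments. Unset Strict Implicit. Unset Printing Implicit Defensive.
Import Order.TTheory GRing.Theory Num.Theory.
Local Open Scope ring_scope.
Local Open Scope complex_scope.

Section QDefs.
Variable R : realType.
Local Notation C := (R[i]).

Definition dag m n (A : 'M[C]_(m, n)) : 'M[C]_(n, m) := (map_mx Num.conj A)^T.

Definition psdmx d (A : 'M[C]_d) : Prop :=
  dag A = A /\ forall v : 'cV[C]_d, 0 <= (dag v *m A *m v) 0 0.
Definition posdefmx d (A : 'M[C]_d) : Prop :=
  dag A = A /\ forall v : 'cV[C]_d, v != 0 -> 0 < (dag v *m A *m v) 0 0.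

(* functional calculus t |-> t^s on (Hermitian, positive semidefinite) matrices,
   via the spectral decomposition A = P^-1 diag(lambda) P with P unitary *)
Definition mpow d (A : 'M[C]_d) (s : R) : 'M[C]_d :=
  invmx (spectralmx A)
  *m diag_mx (map_mx (fun z : C => ((complex.Re z) `^ s)%:C) (spectral_diag A))
  *m spectralmx A.

Definition absmx d (Y : 'M[C]_d) : 'M[C]_d := mpow (dag Y *m Y) (2^-1).

Definition wnorm d (p : R) (Y : 'M[C]_d) : R :=
  (d%:R) `^ (- p^-1) * (complex.Re (\tr (mpow (absmx Y) p))) `^ (p^-1).

Definition dirichlet d (L : 'M[C]_d -> 'M[C]_d) (Y : 'M[C]_d) : C :=
  - ((d%:R)^-1 * \tr (L Y *m Y)).

(* Hilbert--Schmidt adjoint: tr(B^* T(A)) = tr((hs_adj T B)^* A) *)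
Definition hs_adj d (T : 'M[C]_d -> 'M[C]_d) (B : 'M[C]_d) : 'M[C]_d :=
  \matrix_(i, j) \tr (dag (T (delta_mx i j)) *m B).

Definition linmap d (T : 'M[C]_d -> 'M[C]_d) : Prop :=
  forall (a : C) (A B : 'M[C]_d), T (a *: A + B) = a *: T A + T B.

(* positivity of a block matrix in M_k (x) M_d, given by its blocks B i j *)
Definition psd_blocks d k (B : 'I_k -> 'I_k -> 'M[C]_d) : Prop :=
  forall v : 'I_k -> 'cV[C]_d,
    0 <= \sum_(i < k) \sum_(j < k) (dag (v i) *m B i j *m v j) 0 0.

(* complete positivity: id_k (x) T is positive for every k *)
Definition completely_positive d (T : 'M[C]_d -> 'M[C]_d) : Prop :=
  forall (k : nat) (B : 'I_k -> 'I_k -> 'M[C]_d),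
    psd_blocks B -> psd_blocks (fun i j => T (B i j)).

Definition trace_preserving d (T : 'M[C]_d -> 'M[C]_d) : Prop :=
  forall A : 'M[C]_d, \tr (T A) = \tr A.

Definition doubly_stochastic d (T : 'M[C]_d -> 'M[C]_d) : Prop :=
  [/\ linmap T, completely_positive T, trace_preserving T,
      T 1%:M = 1%:M & hs_adj T 1%:M = 1%:M].

End QDefs.

(* Main.v *)
Set Warnings "-notation-overridden,-ambiguous-paths".
Require Import Defs.
From HB Require Import structures.
From mathcomp Require Import all_boot all_order all_algebra.
From mathcomp Require Import complex.
From mathcomp Require Import reals exp.
From mathcomp Require Import sesquilinear spectral.
From mathcomp Require Import ring lra.
Set Implicit Arguments. Unset Strict Implicit. Unset Printing Implicit Defensive.
Import Order.TTheory GRing.Theory Num.Theory.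
Local Open Scope ring_scope.
Local Open Scope complex_scope.
Local Open Scope sesquilinear_scope.

Section S.
Variable C : numClosedFieldType.


Lemma char_poly_similar n (U D : 'M[C]_n) : U \in unitmx ->
  char_poly (invmx U *m D *m U) = char_poly D.
Proof.
move=> Uu.
set U' := map_mx polyC U.
have H : U' *m char_poly_mx (invmx U *m D *m U) = char_poly_mx D *m U'.
  rewrite /char_poly_mx mulmxBr mulmxBl.
  rewrite -map_mxM !mulmxA mulmxV // mul1mx map_mxM.
  by rewrite scalar_mxC.
have := congr1 determinant H; rewrite !det_mulmx mulrC => /mulIf; apply.
by rewrite /U' det_map_mx polyC_eq0 -unitfE -unitmxE.
Qed.

Lemma char_poly_diag n (a : 'rV[C]_n) :
  char_poly (diag_mx a) = \prod_(x <- [seq a 0 i | i <- enum 'I_n]) ('X - x%:P).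
Proof.
rewrite char_poly_trig ?diag_mx_is_trig // big_map big_enum /=.
by apply: eq_bigr => i _; rewrite mxE eqxx mulr1n.
Qed.

Lemma spec_sum n (A U : 'M[C]_n) (a : 'rV[C]_n) (K : nmodType) (f : C -> K) :
  U \is unitarymx -> A = invmx U *m diag_mx a *m U ->
  \sum_i f (spectral_diag A 0 i) = \sum_i f (a 0 i).
Proof.
move=> Uu eA.
have nA : A \is normalmx by apply/orthomx_spectral_subproof; exists (U, a).
have /orthomx_spectralP eA' := nA.
have e1 : char_poly A = char_poly (diag_mx (spectral_diag A)).
  by rewrite {1}eA' char_poly_similar // spectral_unit.
have e2 : char_poly A = char_poly (diag_mx a).
  by rewrite eA char_poly_similar // unitarymx_unit.
move: (etrans (esym e1) e2); rewrite !char_poly_diag => /prod_XsubC_eq.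
move=> /(@perm_big K +%R 0 _ _ _ xpredT f).
by rewrite !big_map /=.
Qed.

Lemma rowcolE m n p (N : 'M[C]_(m, n)) (K : 'M[C]_(n, p)) i j :
  (row i N *m col j K) 0 0 = (N *m K) i j.
Proof. by rewrite !mxE; apply: eq_bigr => k _; rewrite !mxE. Qed.

Lemma rowtC n m (P : 'M[C]_(n, m)) i : (row i P)^t* = col i (P^t*).
Proof. by rewrite tr_row map_col. Qed.

Lemma form_diag n (P M : 'M[C]_n) (s : 'rV[C]_n) i :
  P \is unitarymx -> M = invmx P *m diag_mx s *m P ->
  s 0 i = (row i P *m M *m (row i P)^t*) 0 0.
Proof.
move=> Pu ->; rewrite rowtC -row_mul rowcolE invmx_unitary //.
rewrite !mulmxA (unitarymxP Pu) mul1mx -mulmxA (unitarymxP Pu) mulmx1.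
by rewrite mxE eqxx mulr1n.
Qed.

Lemma row_unit_norm n (P : 'M[C]_n) i : P \is unitarymx ->
  (row i P *m (row i P)^t*) 0 0 = 1.
Proof.
by move=> Pu; rewrite rowtC rowcolE (unitarymxP Pu) mxE eqxx.
Qed.

Lemma diag_sum n (P : 'M[C]_n) (a : 'rV[C]_n) :
  invmx P *m diag_mx a *m P = \sum_k a 0 k *: (invmx P *m delta_mx k k *m P).
Proof.
rewrite diag_mx_sum_delta mulmx_sumr mulmx_suml; apply: eq_bigr => k _.
by rewrite -scalemxAr -scalemxAl.
Qed.

Lemma conj_form n (M : 'M[C]_n) (u v : 'cV[C]_n) :
  Num.conj ((u^t* *m M *m v) 0 0) = (v^t* *m M^t* *m u) 0 0.
Proof.
have -> : (v^t* *m M^t* *m u) = (u^t* *m M *m v)^t*.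
  by rewrite !trmx_mul !map_mxM !trmxCK mulmxA.
by rewrite !mxE.
Qed.

Lemma form_delta n (M : 'M[C]_n) i j :
  ((delta_mx i 0 : 'cV[C]_n)^t* *m M *m (delta_mx j 0 : 'cV[C]_n)) 0 0 = M i j.
Proof.
have -> : (delta_mx i 0 : 'cV[C]_n)^t* = delta_mx 0 i.
  by rewrite trmx_delta map_delta_mx.
by rewrite -rowE -colE !mxE.
Qed.

Lemma herm_of_form n (M : 'M[C]_n) :
  (forall v : 'cV[C]_n, (v^t* *m M *m v) 0 0 \is Num.real) -> M^t* = M.
Proof.
move=> H.
pose g (u v : 'cV[C]_n) := (u^t* *m M *m v) 0 0.
have gD u v w : g u (v + w) = g u v + g u w by rewrite /g mulmxDr mxE.
have gDl u v w : g (u + v) w = g u w + g v w.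
  by rewrite /g linearD /= map_mxD !mulmxDl mxE.
have gZr u v (c : C) : g u (c *: v) = c * g u v by rewrite /g -scalemxAr mxE.
have gZl u v (c : C) : g (c *: u) v = Num.conj c * g u v.
  by rewrite /g linearZ /= map_mxZ -!scalemxAl !mxE.
have re (z : C) : z \is Num.real -> Num.conj z = z by move=> /CrealP.
have k1 u v : Num.conj (g u v + g v u) = g u v + g v u.
  apply: re; have := H (u + v); rewrite /g -/(g _ _) gDl !gD.
  have := H u; have := H v; rewrite -/(g _ _) -/(g _ _) => Hv Hu.
  set a := g u u; set b := g v v; move=> Huv.
  have -> : g u v + g v u = (a + g u v + (g v u + b)) - a - b by rewrite /a /b; ring.
  by rewrite !rpredB.
have k2 u v : Num.conj ('i * g u v - 'i * g v u) = 'i * g u v - 'i * g v u.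
  have := k1 u ('i *: v); rewrite gZr gZl conjCi.
  by rewrite !mulNr.
have key u v : g v u = Num.conj (g u v).
  have e1 := k1 u v; have e2 := k2 u v.
  rewrite rmorphD /= in e1; rewrite rmorphB !rmorphM /= conjCi in e2.
  move: e1 e2; set a := g u v; set b := g v u; set ca := Num.conj a; set cb := Num.conj b.
  move=> e1 e2.
  have e3 : 'i * (cb - ca) = 'i * (a - b).
    by rewrite mulrBr mulrBr -e2; ring.
  move/(mulfI (neq0Ci C)): e3 => e3.
  have e4 : 2%:R * b = 2%:R * ca.
    have -> : 2%:R * b = (a + b) - (a - b) by ring.
    by rewrite -e1 -e3; ring.
  have n2 : (2%:R : C) != 0 by rewrite pnatr_eq0.
  by move/(mulfI n2): e4.
apply/matrixP => i j.
have := key (delta_mx j 0) (delta_mx i 0); rewrite /g !form_delta => ->.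
by rewrite !mxE.
Qed.

Lemma tr_sim n (P D : 'M[C]_n) : P \in unitmx -> \tr (invmx P *m D *m P) = \tr D.
Proof. by move=> Pu; rewrite mxtrace_mulC mulmxA mulmxV // mul1mx. Qed.

Lemma sim_mul n (U : 'M[C]_n) (a b : 'rV[C]_n) : U \is unitarymx ->
  (invmx U *m diag_mx a *m U) *m (invmx U *m diag_mx b *m U) =
  invmx U *m diag_mx (\row_i (a 0 i * b 0 i)) *m U.
Proof.
move=> Uu; rewrite -!mulmxA (mulmxA U) mulmxV ?unitarymx_unit // mul1mx.
rewrite !mulmxA; congr (_ *m _); rewrite -mulmxA; congr (_ *m _).
apply/matrixP => i j; rewrite mul_diag_mx !mxE.
by case: (i == j); rewrite ?mulr1n ?mulr0n ?mulr0.
Qed.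

Lemma simtC n (U : 'M[C]_n) (a : 'rV[C]_n) : U \is unitarymx ->
  (invmx U *m diag_mx a *m U)^t* = invmx U *m diag_mx (map_mx Num.conj a) *m U.
Proof.
move=> Uu; rewrite !trmx_mul !map_mxM invmx_unitary // trmxCK mulmxA.
by rewrite tr_diag_mx map_diag_mx.
Qed.

End S.

Section T.
Variable R : realType.
Local Notation C := (R[i]).


Lemma dagE m n (A : 'M[C]_(m,n)) : dag A = A^t*.
Proof. by rewrite /dag map_trmx. Qed.

Lemma tr_mpow n (A : 'M[C]_n) (s : R) : \tr (mpow A s) =
  (\sum_i (complex.Re (spectral_diag A 0 i)) `^ s)%:C.
Proof.
rewrite /mpow tr_sim ?spectral_unit // mxtrace_diag rmorph_sum.
by apply: eq_bigr => i _; rewrite mxE.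
Qed.

Lemma dag_sim n (U : 'M[C]_n) (a : 'rV[C]_n) : U \is unitarymx ->
  dag (invmx U *m diag_mx a *m U) = invmx U *m diag_mx (map_mx Num.conj a) *m U.
Proof.
by move=> Uu; rewrite dagE simtC.
Qed.

Lemma realC (x : R) : (x%:C : C) \is Num.real.
Proof.
rewrite realE !lecE /= eqxx /=.
by case: (lerP 0 x) => h //; rewrite ltW.
Qed.

Lemma tr_absmx n (Y U : 'M[C]_n) (r : 'I_n -> R) (q : R) : U \is unitarymx ->
  (forall i, 0 <= r i) ->
  Y = invmx U *m diag_mx (\row_i (r i)%:C) *m U ->
  \tr (mpow (absmx Y) q) = (\sum_i r i `^ q)%:C.
Proof.
move=> Uu r0 eY.
have eM : dag Y *m Y = invmx U *m diag_mx (\row_i ((r i ^+ 2)%:C)) *m U.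
  rewrite eY.
  rewrite (dag_sim _ Uu). apply: etrans (sim_mul _ _ Uu) _.
  apply: (congr1 (fun a => invmx U *m diag_mx a *m U)). apply/rowP => i. rewrite !mxE.
  rewrite conj_Creal ?realC //. by rewrite rmorphXn expr2.
rewrite tr_mpow. congr (_%:C).
pose g := fun z : C => ((complex.Re z) `^ (2^-1))%:C.
have h1 := @spec_sum C n (absmx Y) (spectralmx (dag Y *m Y))
  (map_mx g (spectral_diag (dag Y *m Y))) R (fun z : C => (complex.Re z) `^ q)
  (spectral_unitarymx _) (erefl _).
rewrite h1.
have h2 := @spec_sum C n (dag Y *m Y) U (\row_i (r i ^+ 2)%:C) R
  (fun z : C => (complex.Re (g z)) `^ q) Uu eM.
rewrite (eq_bigr (fun i => (complex.Re (g (spectral_diag (dag Y *m Y) 0 i))) `^ q)); last first.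
  by move=> i _; rewrite mxE.
rewrite h2; apply: eq_bigr => i _; rewrite mxE /g /=.
rewrite powR12_sqrt ?sqr_ge0 // sqrtr_sqr ger0_norm //.
Qed.

End T.

Section T.
Variable R : realType.
Local Notation C := (R[i]).
Lemma wnorm_pow n (Y U : 'M[C]_n) (r : 'I_n -> R) (q : R) : (0 < n)%N -> 0 < q ->
  U \is unitarymx -> (forall i, 0 <= r i) ->
  Y = invmx U *m diag_mx (\row_i (r i)%:C) *m U ->
  wnorm q Y `^ q = n%:R^-1 * \sum_i r i `^ q.
Proof.
move=> n0 q0 Uu r0 eY; rewrite /wnorm (tr_absmx q Uu r0 eY) /=.
have S0 : 0 <= \sum_i r i `^ q by apply: sumr_ge0 => i _; exact: powR_ge0.
rewrite powRM ?powR_ge0 // -!powRrM mulNr mulVf ?gt_eqF //.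
by rewrite (powR_inv1 (ler0n _ n)) (powRr1 S0).
Qed.


Lemma tangent (r x m : R) : 1 <= r -> 0 <= x -> 0 < m ->
  r * m `^ (r - 1) * x <= x `^ r + (r - 1) * m `^ r.
Proof.
move=> r1 x0 m0.
have [->|rn1] := eqVneq r 1.
  by rewrite subrr powRr0 !mul1r powRr1 // mul0r addr0.
have r1' : 1 < r by rewrite lt_neqAle eq_sym rn1.
have r0 : 0 < r by apply: lt_trans r1'.
have r10 : 0 < r - 1 by rewrite subr_gt0.
pose q := r / (r - 1).
have q0 : 0 < q by rewrite divr_gt0.
have pq : r^-1 + q^-1 = 1.
  by rewrite /q invf_div -{1}(div1r r) -mulrDl subrKC mulfV // gt_eqF.
have := @conjugate_powR R x (m `^ (r - 1)) r q x0 (powR_ge0 _ _) r0 q0 pq.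
have e : (r - 1) * q = r by rewrite /q mulrCA mulfV ?gt_eqF // mulr1.
rewrite -(powRrM m (r - 1) q) e.
move=> /(ler_wpM2l (ltW r0)).
have e2 : r * (m `^ r / q) = (r - 1) * m `^ r.
  rewrite /q invf_div mulrCA [r * _]mulrCA mulfV ?gt_eqF // mulr1.
  by rewrite mulrC.
move=> h; rewrite -mulrA (mulrC _ x); apply: le_trans h _.
by rewrite mulrDr e2 mulrCA mulfV ?gt_eqF // mulr1.
Qed.

Lemma jensen (I : finType) (a x : I -> R) (r : R) : 1 <= r ->
  (forall k, 0 <= a k) -> \sum_k a k = 1 -> (forall k, 0 <= x k) ->
  (\sum_k a k * x k) `^ r <= \sum_k a k * x k `^ r.
Proof.
move=> r1 a0 a1 x0.
have r0 : 0 < r by apply: lt_le_trans r1.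
set m := \sum_k a k * x k.
have m0 : 0 <= m by apply: sumr_ge0 => k _; apply: mulr_ge0.
have [->|mp] := eqVneq m 0.
  rewrite powR0; last by rewrite gt_eqF.
  by apply: sumr_ge0 => k _; rewrite mulr_ge0 // powR_ge0.
have mp' : 0 < m by rewrite lt_neqAle eq_sym mp.
have h k : a k * (r * m `^ (r - 1) * x k - (r - 1) * m `^ r) <= a k * x k `^ r.
  by apply: ler_wpM2l => //; rewrite lerBlDr; apply: tangent.
apply: le_trans (ler_sum _ (fun k _ => h k)).
rewrite (eq_bigr (fun k => (r * m `^ (r - 1)) * (a k * x k) - ((r - 1) * m `^ r) * a k)); last first.
  by move=> k _; rewrite mulrBr mulrCA [a k * ((r - 1) * _)]mulrC.
rewrite sumrB -mulr_sumr -mulr_sumr a1 mulr1 -/m.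
by rewrite -mulrA (mulrC (m `^ (r - 1)) m) mulr_powRB1 // mulrBl opprB addrCA subrr addr0 mul1r.
Qed.

Lemma pos_realP (z : C) : 0 <= z -> z = (complex.Re z)%:C /\ 0 <= complex.Re z.
Proof.
rewrite lecE => /andP[/eqP hI hR]; split => //.
by case: z hI {hR} => a b /= ->.
Qed.

Section Lin.
Variables (n : nat) (T : 'M[C]_n -> 'M[C]_n).
Hypothesis lT : linmap T.

Lemma T0 : T 0 = 0.
Proof.
have h := lT 1 0 0; rewrite !scale1r addr0 in h.
by apply: (addrI (T 0)); rewrite addr0 -h.
Qed.

Lemma TD A B : T (A + B) = T A + T B.
Proof. by have := lT 1 A B; rewrite !scale1r. Qed.

Lemma TZ a A : T (a *: A) = a *: T A.
Proof. by have := lT a A 0; rewrite !addr0 T0 addr0. Qed.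

Lemma Tsum (I : finType) (F : I -> 'M[C]_n) : T (\sum_i F i) = \sum_i T (F i).
Proof.
apply: (big_ind2 (fun A B => T A = B)); first exact: T0.
  by move=> A B A' B' <- <-; rewrite TD.
by [].
Qed.

Lemma dag_entry m k (A : 'M[C]_(m, k)) i j : dag A i j = Num.conj (A j i).
Proof. by rewrite !mxE. Qed.

Lemma hs_tr (B Y : 'M[C]_n) : dag Y = Y ->
  \tr (hs_adj T B *m Y) = \tr (dag (T Y) *m B).
Proof.
move=> hY.
have eTY : T Y = \sum_i \sum_j Y i j *: T (delta_mx i j).
  rewrite {1}[Y]matrix_sum_delta Tsum; apply: eq_bigr => i _.
  by rewrite Tsum; apply: eq_bigr => j _; rewrite TZ.
have edag : dag (T Y) = \sum_i \sum_j Num.conj (Y i j) *: dag (T (delta_mx i j)).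
  rewrite eTY; apply/matrixP => a b; rewrite dag_entry !summxE rmorph_sum.
  apply: eq_bigr => i _; rewrite !summxE rmorph_sum; apply: eq_bigr => j _.
  by rewrite !mxE rmorphM.
rewrite edag mulmx_suml raddf_sum /=.
transitivity (\sum_i \sum_j Num.conj (Y i j) * hs_adj T B i j).
  rewrite [in LHS]/mxtrace; apply: eq_bigr => i _; rewrite mxE.
  apply: eq_bigr => j _.
  have hYji : Y j i = Num.conj (Y i j) by rewrite -{1}hY dag_entry.
  by rewrite hYji mulrC.
apply: eq_bigr => i _; rewrite mulmx_suml raddf_sum /=.
apply: eq_bigr => j _.
by rewrite -scalemxAl mxtraceZ mxE.
Qed.

Lemma pos_T : completely_positive T -> forall A : 'M[C]_n,
  (forall v : 'cV[C]_n, 0 <= (dag v *m A *m v) 0 0) ->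
  forall v : 'cV[C]_n, 0 <= (dag v *m T A *m v) 0 0.
Proof.
move=> cp A hA v.
have := cp 1%N (fun _ _ => A); rewrite /psd_blocks.
move=> /(_ _ (fun _ => v)); rewrite !big_ord1; apply.
by move=> w; rewrite !big_ord1.
Qed.
End Lin.

End T.


Section G.
Variable C : numClosedFieldType.

Lemma trace_ge n (Q W : 'M[C]_n) : Q \is unitarymx ->
  \sum_i Num.conj ((row i Q *m W *m (row i Q)^t*) 0 0) * (row i Q *m W *m (row i Q)^t*) 0 0
  <= \tr (W^t* *m W).
Proof.
move=> Qu.
have QtQ : Q^t* *m Q = 1%:M by rewrite -invmx_unitary // mulVmx // unitarymx_unit.
set W' := Q *m W *m Q^t*.
have ew i : (row i Q *m W *m (row i Q)^t*) 0 0 = W' i i.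
  by rewrite rowtC -row_mul rowcolE.
have etr : \tr (W^t* *m W) = \tr (W'^t* *m W').
  have eWt : W'^t* = Q *m W^t* *m Q^t*.
    by rewrite /W' !trmx_mul !map_mxM trmxCK !mulmxA.
  rewrite eWt /W' !mulmxA -(mulmxA (Q *m W^t*) (Q^t*) Q) QtQ mulmx1.
  by rewrite [RHS]mxtrace_mulC !mulmxA QtQ mul1mx.
rewrite etr; under eq_bigr do rewrite ew; clearbody W'.
rewrite /mxtrace; apply: ler_sum => i _.
rewrite mxE (bigD1 i) //= !mxE -[X in X <= _]addr0 lerD2l.
apply: sumr_ge0 => j _; rewrite !mxE mulrC; exact: mul_conjC_ge0.
Qed.

Lemma Bpsd n (P : 'M[C]_n) k (v : 'cV[C]_n) : P \is unitarymx ->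
  0 <= (v^t* *m (invmx P *m delta_mx k k *m P) *m v) 0 0.
Proof.
move=> Pu; rewrite invmx_unitary //.
pose c : 'M[C]_1 := (delta_mx 0 k : 'M[C]_(1, n)) *m (P *m v).
have e : v^t* *m (P^t* *m delta_mx k k *m P) *m v = c^t* *m c.
  have dkk : delta_mx k k = (delta_mx k 0 : 'M[C]_(n, 1)) *m (delta_mx 0 k : 'M[C]_(1, n)).
    by rewrite mul_delta_mx.
  have ct : c^t* = v^t* *m P^t* *m (delta_mx k 0 : 'M[C]_(n, 1)).
    by rewrite /c !trmx_mul !map_mxM trmx_delta map_delta_mx ?mulmxA.
  by rewrite ct /c dkk !mulmxA.
rewrite e mxE big_ord1 !mxE mulrC; exact: mul_conjC_ge0.
Qed.

End G.

Section T3.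
Variable R : realType.
Local Notation C := (R[i]).

Lemma herm_normal n (X : 'M[C]_n) : dag X = X -> X \is normalmx.
Proof. by move=> hX; apply/normalmxP; rewrite -dagE hX. Qed.

Lemma dag_row n (Q : 'M[C]_n) i : dag ((row i Q)^t*) = row i Q.
Proof. by rewrite dagE trmxCK. Qed.

Lemma psd_of_posdef n (X : 'M[C]_n) :
  (forall v : 'cV[C]_n, v != 0 -> 0 < (dag v *m X *m v) 0 0) ->
  forall v : 'cV[C]_n, 0 <= (dag v *m X *m v) 0 0.
Proof.
move=> pX v; have [->|vn0] := eqVneq v 0; last exact: ltW (pX v vn0).
by rewrite mulmx0 mxE.
Qed.

Lemma form_lin n (T : 'M[C]_n -> 'M[C]_n) (lT : linmap T) (u : 'rV[C]_n) (v : 'cV[C]_n)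
  (B : 'I_n -> 'M[C]_n) (c : 'I_n -> C) :
  (u *m T (\sum_k c k *: B k) *m v) 0 0 = \sum_k c k * (u *m T (B k) *m v) 0 0.
Proof.
rewrite (Tsum lT) mulmx_sumr mulmx_suml summxE; apply: eq_bigr => k _.
by rewrite (TZ lT) -scalemxAr -scalemxAl mxE.
Qed.

Lemma Bpsd' n (P : 'M[C]_n) k (v : 'cV[C]_n) : P \is unitarymx ->
  0 <= (dag v *m (invmx P *m delta_mx k k *m P) *m v) 0 0.
Proof. by move=> Pu; rewrite dagE; apply: Bpsd. Qed.

Lemma trace_ge' n (Q W : 'M[C]_n) : Q \is unitarymx ->
  \sum_i Num.conj ((row i Q *m W *m (row i Q)^t*) 0 0) * (row i Q *m W *m (row i Q)^t*) 0 0
  <= \tr (dag W *m W).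
Proof. by move=> Qu; rewrite dagE; apply: trace_ge. Qed.

End T3.


Theorem mainTheorem14 (R : realType) (d : nat) (T : 'M[R[i]]_d -> 'M[R[i]]_d)
  (X : 'M[R[i]]_d) (q : R) :
  (0 < d)%N -> doubly_stochastic T -> posdefmx X -> 2 <= q ->
  ((wnorm q (T X)) `^ q - (wnorm q X) `^ q)%:C
    <= - dirichlet (fun Y => hs_adj T (T Y) - Y) (mpow X (q / 2)).
Proof.
move=> d0 [lT cpT tpT T1 Ts1] [hX pX] q2.
have q0 : 0 < q by apply: lt_le_trans q2.
have psdX := psd_of_posdef pX.
have Pu : spectralmx X \is unitarymx := spectral_unitarymx X.
have /orthomx_spectralP eX := herm_normal hX.
move: eX Pu; set P := spectralmx X => eX Pu.
pose x k := complex.Re (spectral_diag X 0 k).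
have sx k : spectral_diag X 0 k = (x k)%:C /\ 0 <= x k.
  apply: pos_realP; rewrite (form_diag k Pu eX) -{1}(dag_row P k); exact: psdX.
have eX' : X = invmx P *m diag_mx (\row_k (x k)%:C) *m P.
  apply: (etrans eX); apply: (congr1 (fun a => invmx P *m diag_mx a *m P)).
  by apply/rowP => k; rewrite mxE; exact: (sx k).1.
have x0 k : 0 <= x k := (sx k).2.
have eY : mpow X (q / 2) = invmx P *m diag_mx (\row_k (x k `^ (q / 2))%:C) *m P.
  rewrite /mpow -/P; apply: (congr1 (fun a => invmx P *m diag_mx a *m P)).
  by apply/rowP => k; rewrite !mxE.
move: eY; set Y := mpow X (q / 2) => eY.
pose B k := invmx P *m delta_mx k k *m P.
have XB : X = \sum_k (x k)%:C *: B k.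
  rewrite {1}eX' diag_sum; apply: eq_bigr => k _; by rewrite mxE.
have YB : Y = \sum_k (x k `^ (q / 2))%:C *: B k.
  rewrite eY diag_sum; apply: eq_bigr => k _; by rewrite mxE.
have B1 : \sum_k (const_mx 1 : 'rV[R[i]]_d) 0 k *: B k = 1%:M.
  have e1 := diag_sum P (const_mx 1).
  rewrite diag_const_mx mulmx1 (mulVmx (unitarymx_unit Pu)) in e1.
  exact: (esym e1).
have psdZ v : 0 <= (dag v *m T X *m v) 0 0 := pos_T cpT psdX v.
have hZ : dag (T X) = T X.
  rewrite dagE; apply: herm_of_form => v.
  by have := psdZ v; rewrite dagE => /ger0_real.
have Qu : spectralmx (T X) \is unitarymx := spectral_unitarymx (T X).
have /orthomx_spectralP eZ := herm_normal hZ.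
move: eZ Qu; set Q := spectralmx (T X) => eZ Qu.
pose p i k := (row i Q *m T (B k) *m (row i Q)^t*) 0 0.
have p_ge0 i k : 0 <= p i k.
  have h := pos_T cpT (fun v => Bpsd' (P:=P) k v Pu) ((row i Q)^t*).
  rewrite dag_row in h.
  exact: h.
pose a i k := complex.Re (p i k).
have pa i k : p i k = (a i k)%:C /\ 0 <= a i k := pos_realP (p_ge0 i k).
have sumform i (c : 'I_d -> R[i]) :
    (row i Q *m T (\sum_k c k *: B k) *m (row i Q)^t*) 0 0 = \sum_k c k * p i k.
  exact: form_lin.
have a1 i : \sum_k a i k = 1.
  apply: complexI; rewrite rmorph_sum /=.
  have e1 := sumform i (fun k => (const_mx 1 : 'rV[R[i]]_d) 0 k).
  rewrite B1 in e1.
  rewrite T1 in e1.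
  rewrite mulmx1 in e1.
  rewrite (row_unit_norm i Qu) in e1.
  rewrite -[RHS]/(1 : R[i]) e1; apply: eq_bigr => k _; by rewrite mxE mul1r (pa i k).1.
pose m i := \sum_k a i k * x k.
have m0 i : 0 <= m i by apply: sumr_ge0 => k _; apply: mulr_ge0; [exact: (pa i k).2 | exact: x0].
have mu i : spectral_diag (T X) 0 i = (m i)%:C.
  rewrite (form_diag i Qu eZ).
  have e := sumform i (fun k => (x k)%:C).
  rewrite -XB in e.
  rewrite e rmorph_sum; apply: eq_bigr => k _.
  by rewrite (pa i k).1 -rmorphM mulrC.
have eZ' : T X = invmx Q *m diag_mx (\row_i (m i)%:C) *m Q.
  apply: (etrans eZ); apply: (congr1 (fun a => invmx Q *m diag_mx a *m Q)).
  by apply/rowP => i; rewrite mxE; exact: mu.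
have LZ := wnorm_pow d0 q0 Qu m0 eZ'.
have LX := wnorm_pow d0 q0 Pu x0 eX'.
have E := f_equal2 (fun a b : R => a - b) LZ LX.
apply: (eq_ind_r (fun z : R => z%:C <= _) _ E) => /=.
have hY : dag Y = Y.
  rewrite eY (dag_sim _ Pu).
  apply: (congr1 (fun a => invmx P *m diag_mx a *m P)).
  by apply/rowP => k; rewrite !mxE conj_Creal ?realC.
have hq : q / 2 + q / 2 = q by rewrite -splitr.
have trYY : \tr (Y *m Y) = (\sum_k x k `^ q)%:C.
  rewrite eY (sim_mul _ _ Pu) (tr_sim _ (unitarymx_unit Pu)) mxtrace_diag rmorph_sum.
  apply: eq_bigr => k _; rewrite !mxE -rmorphM -powRD; first by rewrite hq.
  by rewrite hq (gt_eqF q0).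
have eTr : \tr (hs_adj T (T Y) *m Y) = \tr (dag (T Y) *m T Y) := hs_tr lT (T Y) hY.
have ER : - dirichlet (fun Y => hs_adj T (T Y) - Y) Y =
    d%:R^-1 * (\tr (dag (T Y) *m T Y) - (\sum_k x k `^ q)%:C).
  rewrite /dirichlet opprK mulmxBl raddfB /=.
  by rewrite eTr trYY.
apply: (eq_ind_r (fun z => _ <= z) _ ER).
pose nn i := \sum_k a i k * x k `^ (q / 2).
have wn i : (row i Q *m T Y *m (row i Q)^t*) 0 0 = (nn i)%:C.
  have e := sumform i (fun k => (x k `^ (q / 2))%:C).
  rewrite -YB in e.
  rewrite e rmorph_sum; apply: eq_bigr => k _.
  by rewrite (pa i k).1 -rmorphM mulrC.
have trW : (\sum_i (nn i) ^+ 2)%:C <= \tr (dag (T Y) *m T Y).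
  apply: (le_trans _ (trace_ge' (T Y) Qu)).
  rewrite rmorph_sum le_eqVlt; apply/orP; left; apply/eqP; apply: eq_bigr => i _.
  by rewrite wn conj_Creal ?realC // -rmorphM expr2.
have h1 : 1 <= q / 2 by rewrite ler_pdivlMr // mul1r.
have h2 : q / 2 * 2%:R = q by rewrite divfK // pnatr_eq0.
have key i : m i `^ q <= (nn i) ^+ 2.
  have j := jensen (a := a i) (x := x) h1 (fun k => (pa i k).2) (a1 i) x0.
  have -> : m i `^ q = (m i `^ (q / 2)) ^+ 2.
    by rewrite -(powR_mulrn 2 (powR_ge0 _ _)) -powRrM h2.
  have nn0 : 0 <= nn i.
    by apply: sumr_ge0 => k _; apply: mulr_ge0; [exact: (pa i k).2 | exact: powR_ge0].
  by rewrite ler_sqr ?nnegrE ?powR_ge0.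
have EL : (d%:R^-1 * \sum_i m i `^ q - d%:R^-1 * \sum_k x k `^ q)%:C =
    (d%:R^-1 : R[i]) * ((\sum_i m i `^ q)%:C - (\sum_k x k `^ q)%:C).
  by rewrite -mulrBr rmorphM fmorphV rmorph_nat rmorphB.
rewrite EL.
apply: ler_wpM2l; first by rewrite invr_ge0 ler0n.
apply: lerD; last exact: lexx.
apply: le_trans trW; rewrite lecR; apply: ler_sum => i _; exact: key.
Qed.
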